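(* Let $r\ge1$, $G\subset\mathbb{Z}_2^r$ a subgroup with $1^r\in G$, $D_G=\Delta G$, $C_G=D_G^\perp$. For every $d\in D_G$, $\Delta^d$ is a maximal isotropic subgroup of $C_G^d=\mathbb{Z}_2^d\cap C_G$.
   Context: $\Delta:\mathbb{Z}_2^r\to\mathbb{Z}_2^{r+r}$, $g\mapsto(g,g)$. For $c\in\mathbb{Z}_2^{r+r}$, $|c|_l$ and $|c|_r$ are the numbers of ones among the first $r$ and last $r$ coordinates, $|c|=|c|_l-|c|_r$; products of codewords are componentwise. For a subgroup $A$, $A^\perp=\{\beta:|\beta a|\in2\mathbb{Z}\ \forall a\in A\}$. For $d\in\mathbb{Z}_2^{r+r}$, $\mathbb{Z}_2^d=\{\alpha:d\alpha=\alpha\}$ and $\Delta^d=\mathbb{Z}_2^d\cap\Delta(\mathbb{Z}_2^r)$. A subgroup $H$ is isotropic if $|\alpha\beta|\in2\mathbb{Z}$ for all $\alpha,\beta\in H$; maximal isotropic means not properly contained in another isotropic subgroup of $C_G^d$. *)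

(* Defs.v *)
From HB Require Import structures.
From mathcomp Require Import all_boot all_order all_algebra.
Set Implicit Arguments. Unset Strict Implicit. Unset Printing Implicit Defensive.
Import Order.TTheory GRing.Theory Num.Theory.
Local Open Scope ring_scope.

Notation Z2vec n := 'rV['F_2]_n.

Definition is_subgroup n (A : {set Z2vec n}) : Prop :=
  0 \in A /\ (forall a b, a \in A -> b \in A -> a - b \in A).

Definition Delta r (g : Z2vec r) : Z2vec (r + r) := row_mx g g.

Definition mulv n (a b : Z2vec n) : Z2vec n := \row_j (a 0 j * b 0 j).

Definition wt_l r (c : Z2vec (r + r)) : nat :=
  #|[set i : 'I_r | c 0 (lshift r i) == 1]|.
Definition wt_r r (c : Z2vec (r + r)) : nat :=
  #|[set i : 'I_r | c 0 (rshift r i) == 1]|.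
Definition wt r (c : Z2vec (r + r)) : int := (wt_l c)%:Z - (wt_r c)%:Z.

Definition even_int (z : int) : bool := (2 %| z)%Z.

Definition perp r (A : {set Z2vec (r + r)}) : {set Z2vec (r + r)} :=
  [set b | [forall a in A, even_int (wt (mulv b a))]].

Definition Zd r (d : Z2vec (r + r)) : {set Z2vec (r + r)} :=
  [set a | mulv d a == a].
Definition DeltaD r (d : Z2vec (r + r)) : {set Z2vec (r + r)} :=
  Zd d :&: [set Delta g | g in [set: Z2vec r]].

Definition DG r (G : {set Z2vec r}) : {set Z2vec (r + r)} := [set Delta g | g in G].
Definition CG r (G : {set Z2vec r}) : {set Z2vec (r + r)} := perp (DG G).

Definition isotropic r (H : {set Z2vec (r + r)}) : Prop :=
  forall a b, a \in H -> b \in H -> even_int (wt (mulv a b)).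

Definition max_isotropic_in r (H K : {set Z2vec (r + r)}) : Prop :=
  [/\ is_subgroup H, H \subset K, isotropic H &
      forall H' : {set Z2vec (r + r)}, is_subgroup H' -> H \subset H' ->
        H' \subset K -> isotropic H' -> H' = H].

(* Main.v *)
Require Import Defs.
From mathcomp Require Import all_boot all_order all_algebra.
Set Implicit Arguments. Unset Strict Implicit. Unset Printing Implicit Defensive.
Import Order.TTheory GRing.Theory Num.Theory.
Local Open Scope ring_scope.

Lemma mulv_row r (a b c e : Z2vec r) :
  mulv (row_mx a b) (row_mx c e) = row_mx (mulv a c) (mulv b e).
Proof.
apply/rowP => j; rewrite mxE -(splitK j); case: (split j) => k /=;
  by rewrite ?(row_mxEl, row_mxEr) mxE.
Qed.

Lemma wt_lE r (a b : Z2vec r) : wt_l (row_mx a b) = #|[set i | a 0 i == 1]|.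
Proof. by apply: eq_card => i; rewrite !inE row_mxEl. Qed.
Lemma wt_rE r (a b : Z2vec r) : wt_r (row_mx a b) = #|[set i | b 0 i == 1]|.
Proof. by apply: eq_card => i; rewrite !inE row_mxEr. Qed.

Lemma wt_Delta r (a : Z2vec r) : wt (Delta a) = 0.
Proof. by rewrite /wt /Delta wt_lE wt_rE subrr. Qed.

Lemma mulv_Delta r (a b : Z2vec r) : mulv (Delta a) (Delta b) = Delta (mulv a b).
Proof. exact: mulv_row. Qed.

Lemma F2_cases (u : 'F_2) : u = 0 \/ u = 1.
Proof. by case: u => [[|[|k]] Hk]; [left; apply/val_inj|right; apply/val_inj|]. Qed.

Lemma card_delta r (x : Z2vec r) (i : 'I_r) :
  #|[set j | (mulv x (delta_mx 0 i)) 0 j == 1]| = (x 0 i == 1) :> nat.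
Proof.
have -> : [set j | (mulv x (delta_mx 0 i)) 0 j == 1] =
          [set j | (j == i) && (x 0 i == 1)].
  apply/setP => j; rewrite !inE !mxE /=.
  by case: (eqVneq j i) => [->|_]; rewrite ?mulr1 ?mulr0.
case: (x 0 i == 1).
  by rewrite (_ : [set j | _] = [set i]) ?cards1 //; apply/setP => j; rewrite !inE andbT.
by rewrite (_ : [set j | _] = set0) ?cards0 //; apply/setP => j; rewrite !inE andbF.
Qed.

Lemma even_01 (b c : bool) : even_int ((b : nat)%:Z - (c : nat)%:Z) -> b = c.
Proof. by case: b; case: c. Qed.

Theorem mainTheorem12 (r : nat) (hr : (1 <= r)%N) (G : {set 'rV['F_2]_r})
  (hG : is_subgroup G) (h1 : const_mx 1 \in G) :
  forall d, d \in DG G -> max_isotropic_in (DeltaD d) (Zd d :&: CG G).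
Proof.
move=> d /imsetP [g0 _ ->].
have DDP a : a \in DeltaD (Delta g0) -> exists2 g, a = Delta g & mulv g0 g = g.
  rewrite !inE => /andP [/eqP Ha /imsetP [g _ Hg]].
  exists g => //; move: Ha; rewrite Hg mulv_Delta.
  by move/eq_row_mx => [->].
have DDI g : mulv g0 g = g -> Delta g \in DeltaD (Delta g0).
  move=> Hg; rewrite !inE mulv_Delta Hg eqxx /=; exact: imset_f.
have iso : isotropic (DeltaD (Delta g0)).
  move=> a b /DDP [g -> _] /DDP [h -> _]; by rewrite mulv_Delta wt_Delta.
split => //.
- split.
    rewrite (_ : (0 : Z2vec (r + r)) = Delta (0 : Z2vec r)); last by rewrite /Delta row_mx0.
    apply: DDI; apply/rowP => j; by rewrite !mxE mulr0.
  move=> a b /DDP [g -> Hg] /DDP [h -> Hh].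
  rewrite (_ : Delta g - Delta h = Delta (g - h)); last first.
    by rewrite /Delta opp_row_mx add_row_mx.
  apply: DDI; apply/rowP => j; move/rowP: Hg => /(_ j); move/rowP: Hh => /(_ j).
  by rewrite !mxE mulrBr => -> ->.
- apply/subsetP => a Ha; have := Ha; move/DDP => [g Hag _].
  rewrite inE; apply/andP; split; first by move: Ha; rewrite inE => /andP [].
  rewrite inE; apply/forallP => b; apply/implyP => /imsetP [h _ ->].
  by rewrite Hag mulv_Delta wt_Delta.
move=> H' [H0 HB] sub sub2 isoH'.
apply/eqP; rewrite eqEsubset sub andbT; apply/subsetP => b Hb.
have := subsetP sub2 b Hb; rewrite !inE => /andP [/eqP Hd _].
rewrite -(hsubmxK b) in Hd Hb *.
set x := lsubmx b in Hd Hb *; set y := rsubmx b in Hd Hb *.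
move: Hd; rewrite /Delta mulv_row => /eq_row_mx [Hx Hy].
have xy : x = y.
  apply/rowP => i; case: (F2_cases (g0 0 i)) => Hgi.
    move/rowP: Hx => /(_ i); move/rowP: Hy => /(_ i).
    by rewrite !mxE Hgi !mul0r => <- <-.
  have He : Delta (delta_mx 0 i) \in H'.
    apply: (subsetP sub); apply: DDI; apply/rowP => j; rewrite !mxE.
    by case: (eqVneq j i) => [->|_]; rewrite ?Hgi ?mulr1 ?mulr0.
  have := isoH' _ _ Hb He; rewrite /Delta mulv_row /wt wt_lE wt_rE !card_delta.
  move/even_01 => E.
  case: (F2_cases (x 0 i)) => Ex; case: (F2_cases (y 0 i)) => Ey;
    rewrite Ex Ey; move: E; rewrite Ex Ey //.
by rewrite -xy Hx eqxx /=; apply: imset_f.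
Qed.
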